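(* Let $H$ be a finite two-step nilpotent $p$-group ($p$ prime) whose commutator subgroup $[H,H]$ is cyclic. Then \[ m_{\mathsf{faithful}}(H)=\sqrt{[H:Z(H)]}+m_{\mathsf{faithful}}(Z(H))-1, \] where $Z(H)$ is the center of $H$.
   Context: For a finite group $G$, $m_{\mathsf{faithful}}(G)$ denotes the smallest dimension of a faithful complex representation of $G$. *)

(* Defs.v *)
From HB Require Import structures.
From mathcomp Require Import all_boot all_order all_algebra all_fingroup all_solvable all_field all_character.
From mathcomp Require Import pgroup nilpotent commutator center mxrepresentation.
From Stdlib Require Import ClassicalEpsilon.
Set Implicit Arguments. Unset Strict Implicit. Unset Printing Implicit Defensive.

Definition has_faithful_rep (gT : finGroupType) (G : {group gT}) (n : nat) : Prop :=
  exists rG : mx_representation algC G n, mx_faithful rG.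

Definition has_faithful_repb (gT : finGroupType) (G : {group gT}) (n : nat) : bool :=
  if excluded_middle_informative (has_faithful_rep G n) then true else false.

Lemma has_faithful_repb_P (gT : finGroupType) (G : {group gT}) n :
  reflect (has_faithful_rep G n) (has_faithful_repb G n).
Proof.
rewrite /has_faithful_repb; case: excluded_middle_informative => H.
  by constructor. by constructor.
Qed.

Lemma exists_faithful_dim (gT : finGroupType) (G : {group gT}) :
  exists n, has_faithful_repb G n.
Proof.
exists (gcard G); apply/has_faithful_repb_P.
exists (regular_repr algC G); exact: regular_mx_faithful.
Qed.

Definition m_faithful (gT : finGroupType) (G : {group gT}) : nat :=
  ex_minn (exists_faithful_dim G).

(* Main.v *)
Require Import Defs.
From HB Require Import structures.
From mathcomp Require Import all_boot all_order all_algebra all_fingroup all_solvable all_field all_character.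
From mathcomp Require Import pgroup nilpotent commutator center mxrepresentation.
Set Implicit Arguments. Unset Strict Implicit. Unset Printing Implicit Defensive.
Import Order.TTheory GRing.Theory Num.Theory.
Section P1.
Variables (gT : finGroupType) (G : {group gT}).
Local Open Scope ring_scope.

Definition ideg (i : Iirr G) : nat := irr_degree (socle_of_Iirr i).
Lemma ideg1 (i : Iirr G) : 'chi_i 1%g = (ideg i)%:R.
Proof. exact: irr1_degree. Qed.
Lemma ideg_gt0 i : (0 < ideg i)%N.
Proof. by rewrite -(ltr_nat algC) -ideg1 irr1_gt0. Qed.

Definition ffset (S : {set Iirr G}) : bool :=
  (G :&: \bigcap_(i in S) cfker 'chi_i \subset [1])%g.

Lemma cfker_sumS (S : {set Iirr G}) :
  cfker (\sum_(i in S) 'chi[G]_i) = (G :&: \bigcap_(i in S) cfker 'chi_i)%g.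
Proof.
rewrite cfkerE ?rpred_sum // => [|i _]; last exact: irr_char.
congr (_ :&: _)%g; apply: eq_bigl => j; rewrite irr_consttE cfdot_suml.
have [jS|jS] := boolP (j \in S).
  rewrite (bigD1 j) //= cfdot_irr eqxx big1 ?addr0 ?oner_eq0 // => i /andP[_ ij].
  by rewrite cfdot_irr (negbTE ij).
rewrite big1 ?eqxx // => i iS; rewrite cfdot_irr.
by have /negbTE->: i != j by apply: contraNneq jS => <-.
Qed.

Lemma rep_ffset n : has_faithful_rep G n ->
  exists S, ffset S /\ (\sum_(i in S) ideg i <= n)%N.
Proof.
case=> rG ffG; set phi := cfRepr rG.
have Nphi : phi \is a character by exact: cfRepr_char.
exists [set i | i \in irr_constt phi]; split.
  rewrite /ffset; apply: subset_trans ffG; rewrite -cfker_repr -/phi cfkerE //.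
  by rewrite (eq_bigl (fun i => i \in irr_constt phi)) // => i; rewrite inE.
rewrite -(ler_nat algC) natr_sum -(cfRepr1 rG) -/phi {2}[phi]cfun_sum_constt sum_cfunE.
rewrite (eq_bigl (fun i => i \in irr_constt phi)) => [|i]; last by rewrite inE.
apply: ler_sum => i Hi; rewrite cfunE ideg1.
apply: ler_peMl; first exact: ler0n.
have := Hi; rewrite irr_consttE.
case/natrP: (Cnat_cfdot_char_irr i Nphi) => m ->.
by rewrite pnatr_eq0 ler1n lt0n.
Qed.

Lemma ffset_rep (S : {set Iirr G}) : ffset S -> has_faithful_rep G (\sum_(i in S) ideg i).
Proof.
move=> ffS; set phi := \sum_(i in S) 'chi[G]_i.
have Nphi : phi \is a character by rewrite rpred_sum // => i _; exact: irr_char.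
case/char_reprP: Nphi => [[d rG] Ephi].
have Ed : d = (\sum_(i in S) ideg i)%N.
  apply/eqP; rewrite -(eqr_nat algC) -(cfRepr1 rG) /= -Ephi natr_sum sum_cfunE.
  by apply/eqP/eq_bigr => i _; rewrite ideg1.
rewrite -Ed; exists rG; rewrite /mx_faithful -cfker_repr -Ephi cfker_sumS; exact: ffS.
Qed.

Lemma m_le n : has_faithful_rep G n -> (m_faithful G <= n)%N.
Proof.
by move=> Hn; rewrite /m_faithful; case: ex_minnP => m _; apply; apply/has_faithful_repb_P.
Qed.

Lemma m_spec : has_faithful_rep G (m_faithful G).
Proof. by rewrite /m_faithful; case: ex_minnP => m /has_faithful_repb_P. Qed.

Lemma m_setP : exists S, ffset S /\ (\sum_(i in S) ideg i <= m_faithful G)%N.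
Proof. exact: rep_ffset m_spec. Qed.

Lemma m_setle S : ffset S -> (m_faithful G <= \sum_(i in S) ideg i)%N.
Proof. by move/ffset_rep/m_le. Qed.

End P1.
Section P2.
Variables (gT : finGroupType) (G : {group gT}).
Local Open Scope ring_scope.

Lemma Z_sub_cfcenter (i : Iirr G) : ('Z(G) \subset 'Z('chi_i)%CF)%g.
Proof. by rewrite -cap_cfcenter_irr; exact: (bigcap_inf i). Qed.

Lemma ResZ (i : Iirr G) : exists j : Iirr 'Z(G), 'Res['Z(G)] 'chi_i = 'chi_i 1%g *: 'chi_j.
Proof.
have [xi Lxi E] := cfcenter_Res 'chi_i.
have := cfRes_lin_char 'Z(G) Lxi => /lin_char_irr/irrP[j Ej].
exists j; rewrite -(cfResRes _ (Z_sub_cfcenter i) (cfcenter_sub _)) E linearZ /=.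
by rewrite Ej.
Qed.

Lemma ResZ_ex (j : Iirr 'Z(G)) : exists i : Iirr G, 'Res['Z(G)] 'chi_i = 'chi_i 1%g *: 'chi_j.
Proof.
have [i Hi] := neq0_has_constt (Ind_irr_neq0 j (center_sub G)).
rewrite constt_Ind_Res in Hi.
have [k Ek] := ResZ i; exists i; rewrite Ek.
move: Hi; rewrite irr_consttE Ek cfdotZl cfdot_irr mulf_eq0 negb_or pnatr_eq0 eqb0 negbK.
by case/andP=> _ /eqP->.
Qed.

Lemma kerZ (i : Iirr G) (j : Iirr 'Z(G)) :
  'Res['Z(G)] 'chi_i = 'chi_i 1%g *: 'chi_j ->
  ('Z(G) :&: cfker 'chi_i)%g = cfker 'chi_j.
Proof.
move=> E; have sZ := center_sub G.
have nz : 'chi_i 1%g != 0 by exact: irr1_neq0.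
have Ej x : x \in 'Z(G)%g -> 'chi_i x = 'chi_i 1%g * 'chi_j x.
  by move=> Zx; rewrite -(cfResE _ sZ Zx) E cfunE.
have j1 : 'chi_j 1%g = 1.
  by apply: (mulfI nz); rewrite -Ej ?group1 // mulr1.
apply/setP=> x; have [Zx|Zx] := boolP (x \in 'Z(G)%g).
  move: (Zx); rewrite [x \in 'Z(G)%g]inE => /andP[Gx Cx].
  rewrite in_setI !cfkerEchar ?irr_char // !in_set Gx Cx /= Ej // j1.
  by rewrite -[X in _ == X](mulr1 ('chi_i 1%g)) (inj_eq (mulfI nz)).
move: (Zx); rewrite [x \in 'Z(G)%g]inE negb_and => ZZ.
rewrite in_setI cfkerEchar ?irr_char // !in_set.
by case/orP: ZZ => /negbTE-> //; rewrite !andbF.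
Qed.

Lemma cfcenter_in_Z (i : Iirr G) :
  ([~: G, G] :&: cfker 'chi_i \subset [1])%g -> ('Z('chi_i)%CF \subset 'Z(G))%g.
Proof.
move=> TI; apply/subsetP=> x Zx.
have Gx : x \in G by exact: (subsetP (cfcenter_sub 'chi_i) x Zx).
set K := cfker 'chi_i.
have nKG : (G \subset 'N(K))%g by exact: normal_norm (cfker_normal _).
have := subsetP (cfcenter_subset_center 'chi_i) (coset K x) (mem_quotient K Zx).
case/centerP=> _ cx.
apply/centerP; split=> // y Gy; apply/commgP.
have Rxy : [~ x, y]%g \in ([~: G, G] :&: K)%g.
  rewrite inE mem_commg //=; apply: coset_idr; first by rewrite groupR // (subsetP nKG).
  rewrite (morphR _ (subsetP nKG x Gx) (subsetP nKG y Gy)); apply/eqP/commgP.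
  by rewrite /commute (cx (coset K y)) // mem_quotient.
by have := subsetP TI _ Rxy; rewrite inE.
Qed.
End P2.
Section P3.
Variables (gT : finGroupType).
Local Open Scope ring_scope.

Lemma TI_exists (G C : {group gT}) (p : nat) (S : {set Iirr G}) :
  (p.-group C)%g -> cyclic C -> C != 1%g :> {set gT} -> (C \subset G)%g -> ffset S ->
  exists2 i, i \in S & (C :&: cfker 'chi_i \subset [1])%g.
Proof.
move=> pC cC ntC sCG ffS.
have [pr_p pdC _] := pgroup_pdiv pC ntC.
have [x Cx ox] := Cauchy pr_p pdC.
case: (pickP [pred i | (i \in S) && (C :&: cfker 'chi_i \subset [1])%g]) => [i /andP[iS Hi] | none].
  by exists i.
exfalso.
have: x \in (G :&: \bigcap_(i in S) cfker 'chi_i)%g.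
  rewrite inE (subsetP sCG) //=; apply/bigcapP => i iS.
  have := none i; rewrite /= iS /= => ntK.
  pose D := (C :&: cfker_group 'chi_i)%G.
  have ntD : D != 1%g :> {set gT} by rewrite -subG1 /= ntK.
  have pD : (p.-group D)%g := pgroupS (subsetIl _ _) pC.
  have [_ pdD _] := pgroup_pdiv pD ntD.
  have [y Dy oy] := Cauchy pr_p pdD.
  have Cy : y \in C by move: Dy; rewrite inE => /andP[].
  have Exy : <[x]>%g = <[y]>%g.
    apply/eqP; rewrite (eq_subG_cyclic cC) ?cycle_subG //.
    by rewrite -!orderE ox oy.
  have Ky : y \in cfker 'chi_i by move: Dy; rewrite inE => /andP[].
  have : x \in <[y]>%g by rewrite -Exy cycle_id.
  by apply: subsetP; rewrite cycle_subG.
move/(subsetP ffS); rewrite inE => /eqP x1.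
by move: ox; rewrite x1 order1 => p1; rewrite -p1 in pr_p.
Qed.

Lemma prim_lin (G : {group gT}) (xi : 'CF(G)) g :
  xi \is a linear_char -> g \in G -> (<[g]> :&: cfker xi \subset [1])%g ->
  #[g]%g.-primitive_root (xi g).
Proof.
move=> Lxi Gg TI.
have [m pm dm] := prim_order_exists (order_gt0 g) (lin_char_unity_root Lxi Gg).
suff -> : #[g]%g = m by [].
apply/eqP; rewrite eqn_dvd dm andbT order_dvdn.
have : (g ^+ m)%g \in (<[g]> :&: cfker xi)%g.
  rewrite inE mem_cycle cfkerEchar ?lin_charW // inE groupX //=.
  by rewrite lin_charX // (prim_expr_order pm) lin_char1.
by move/(subsetP TI); rewrite inE.
Qed.

Lemma pow_trick (G : {group gT}) (xi1 xi : 'CF(G)) g :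
  xi1 \is a linear_char -> xi \is a linear_char -> g \in G ->
  (<[g]> :&: cfker xi1 \subset [1])%g ->
  exists k, forall x, x \in <[g]>%g -> xi x * xi1 x ^+ k = 1.
Proof.
move=> L1 L Gg TI.
have pr := prim_lin L1 Gg TI.
have [[i ltin] Ei] := prim_rootP pr (lin_char_unity_root L Gg).
exists (#[g]%g - i)%N => x /cycleP[m ->].
rewrite !lin_charX ?(subsetP (cycle_subG g)) // Ei /=.
rewrite -!exprM -exprD [(i * m)%N]mulnC -mulnDr subnKC ?(ltnW ltin) //.
by rewrite mulnC exprM (prim_expr_order pr) expr1n.
Qed.
End P3.
From mathcomp Require Import zify.
From Stdlib Require PeanoNat.

Section P4.
Variables (gT : finGroupType).
Local Open Scope ring_scope.

Lemma ideg_lin (G : {group gT}) (i : Iirr G) : 'chi_i \is a linear_char -> ideg i = 1%N.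
Proof. by move=> L; apply/eqP; rewrite -(eqr_nat algC) -ideg1 (lin_char1 L). Qed.

Lemma ideg_abelian (G : {group gT}) (i : Iirr G) : abelian G -> ideg i = 1%N.
Proof. by move/char_abelianP => /(_ i); exact: ideg_lin. Qed.

Lemma sum_abelian (G : {group gT}) (S : {set Iirr G}) : abelian G ->
  (\sum_(i in S) ideg i)%N = #|S|.
Proof. by move=> abG; rewrite -sum1_card; apply: eq_bigr => i _; exact: ideg_abelian. Qed.

Lemma ideg_sq (H : {group gT}) (i : Iirr H) :
  ([~: H, H] \subset 'Z(H))%g -> (ideg i ^ 2)%N = #|H : 'Z('chi_i)%CF|%g.
Proof.
move=> sDZ; apply/eqP; rewrite -(eqr_nat algC).
rewrite natrX -ideg1.
rewrite irr1_abelian_bound //; apply: sub_der1_abelian.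
by rewrite derg1 (subset_trans sDZ) // Z_sub_cfcenter.
Qed.

Lemma ideg_le_sqrt (H : {group gT}) (i : Iirr H) :
  ([~: H, H] \subset 'Z(H))%g -> (ideg i <= Nat.sqrt #|H : 'Z(H)|%g)%N.
Proof.
move=> sDZ; apply/ssrnat.leP; apply PeanoNat.Nat.sqrt_le_square; apply/ssrnat.leP.
change (ideg i * ideg i <= #|H : 'Z(H)|%g)%N; rewrite mulnn ideg_sq //; apply: dvdn_leq; first exact: indexg_gt0.
exact: indexgS (Z_sub_cfcenter i).
Qed.

Lemma ideg_eq_sqrt (H : {group gT}) (i : Iirr H) :
  ([~: H, H] \subset 'Z(H))%g -> ([~: H, H] :&: cfker 'chi_i \subset [1])%g ->
  ideg i = Nat.sqrt #|H : 'Z(H)|%g.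
Proof.
move=> sDZ TI.
have EZ : 'Z('chi_i)%CF = 'Z(H)%g.
  by apply/eqP; rewrite eqEsubset Z_sub_cfcenter cfcenter_in_Z.
by rewrite -EZ -ideg_sq // -mulnn PeanoNat.Nat.sqrt_square.
Qed.

Lemma sum_setU1_le (I : finType) (x : I) (A : {set I}) (f : I -> nat) :
  (\sum_(i in x |: A) f i <= f x + \sum_(i in A) f i)%N.
Proof.
have [xA|xA] := boolP (x \in A).
  by rewrite (setUidPr _) ?sub1set // leq_addl.
by rewrite big_setU1.
Qed.
End P4.
Section P5.
Variables (gT : finGroupType) (H : {group gT}) (p : nat).
Hypotheses (pH : (p.-group H)%g) (sDZ : ([~: H, H] \subset 'Z(H))%g)
  (cD : cyclic [~: H, H]%g) (ntD : [~: H, H]%g != 1%g :> {set gT}).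
Local Open Scope ring_scope.

Let pD : (p.-group [~: H, H]%G)%g.
Proof. exact: pgroupS (der1_subG H) pH. Qed.

Lemma lower_bound :
  (Nat.sqrt #|H : 'Z(H)|%g + m_faithful 'Z(H)%G - 1 <= m_faithful H)%N.
Proof.
have [S [ffS leS]] := m_setP H.
have [i0 i0S TI0] := TI_exists pD cD ntD (der1_subG H) ffS.
have d0 := ideg_eq_sqrt sDZ TI0.
pose f (i : Iirr H) := odflt 0 [pick j | 'Res['Z(H)] 'chi_i == 'chi_i 1%g *: 'chi[ 'Z(H)%G]_j].
have fP i : 'Res['Z(H)] 'chi_i = 'chi_i 1%g *: 'chi_(f i).
  rewrite /f; case: pickP => [j /eqP //|none].
  by have [j Ej] := ResZ i; have := none j; rewrite /= Ej eqxx.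
set T := [set f i | i in S].
have ffT : ffset T.
  apply/subsetP=> x /setIP[Zx /bigcapP Kx].
  apply: (subsetP ffS); rewrite inE (subsetP (center_sub H)) //=.
  apply/bigcapP=> i iS.
  have := Kx (f i) (imset_f _ iS); rewrite -(kerZ (fP i)).
  by case/setIP.
have mZ : (m_faithful 'Z(H)%G <= #|S|)%N.
  apply: leq_trans (m_setle ffT) _.
  by rewrite sum_abelian ?center_abelian // leq_imset_card.
have sumS : (ideg i0 + (#|S| - 1) <= \sum_(i in S) ideg i)%N.
  rewrite (bigD1 i0) //= leq_add2l (cardsD1 i0 S) i0S add1n subn1 /=.
  rewrite -sum1_card (eq_bigl (fun i => (i \in S) && (i != i0))); last first.
    by move=> i; rewrite !inE andbC.
  by apply: leq_sum => i _; exact: ideg_gt0.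
rewrite -d0; lia.
Qed.
End P5.
Section P6.
Variables (gT : finGroupType) (H : {group gT}) (p : nat).
Hypotheses (pH : (p.-group H)%g) (sDZ : ([~: H, H] \subset 'Z(H))%g)
  (cD : cyclic [~: H, H]%g) (ntD : [~: H, H]%g != 1%g :> {set gT}).
Local Open Scope ring_scope.

Let pD : (p.-group [~: H, H]%G)%g.
Proof. exact: pgroupS (der1_subG H) pH. Qed.

Lemma upper_bound :
  (m_faithful H <= Nat.sqrt #|H : 'Z(H)|%g + m_faithful 'Z(H)%G - 1)%N.
Proof.
set Z := 'Z(H)%G.
have abZ : abelian Z := center_abelian H.
have Llam (j : Iirr Z) : 'chi_j \is a linear_char by exact/char_abelianP.
have [SZ [ffSZ leSZ]] := m_setP Z.
rewrite sum_abelian // in leSZ.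
have [j1 j1S TI1] := TI_exists pD cD ntD sDZ ffSZ.
have [g Dg] := cyclicP cD.
have Zg : g \in Z by apply: (subsetP sDZ); rewrite Dg cycle_id.
have {}TI1 : (<[g]> :&: cfker 'chi_j1 \subset [1])%g by rewrite -Dg; exact: TI1.
have [i1 Ei1] := ResZ_ex j1.
pose P (j : Iirr Z) (i : Iirr H) := (ideg i == 1%N) &&
  [forall x in Z, ((x \in cfker 'chi_i) && ('chi_j1 x == 1)) ==> ('chi_j x == 1)].
have Pex j : exists i, P j i.
  have [k Hk] := pow_trick (Llam j1) (Llam j) Zg TI1.
  pose mu := 'chi_j * 'chi_j1 ^+ k.
  have Lmu : mu \is a linear_char by rewrite rpredM ?rpredX.
  have /irrP[jm Ejm] := lin_char_irr Lmu.
  have [i Ei] := ResZ_ex jm.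
  have KZ := kerZ Ei.
  have muE x : x \in Z -> mu x = 'chi_j x * 'chi_j1 x ^+ k.
    by move=> Zx; rewrite cfunE exp_cfunE.
  exists i; apply/andP; split.
    apply/eqP/ideg_lin; rewrite lin_irr_der1 derg1 Dg cycle_subG.
    have : g \in cfker 'chi_jm.
      rewrite cfkerEchar ?irr_char // inE Zg -Ejm lin_char1 //= muE //.
      by rewrite Hk ?cycle_id.
    by rewrite -KZ => /setIP[].
  apply/forall_inP => x Zx; apply/implyP => /andP[Kx /eqP l1].
  have : x \in cfker 'chi_jm by rewrite -KZ inE Zx.
  rewrite cfkerEchar ?irr_char // inE Zx -Ejm lin_char1 //= muE // l1 expr1n mulr1.
  done.
pose gs j := odflt 0 [pick i | P j i].
have gsP j : P j (gs j).
  by rewrite /gs; case: pickP => [i //|none]; have [i Hi] := Pex j; have := none i; rewrite Hi.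
set B := [set gs j | j in SZ :\ j1].
set T := i1 |: B.
have sumT : (\sum_(i in T) ideg i <= Nat.sqrt #|H : 'Z(H)|%g + (#|SZ| - 1))%N.
  apply: leq_trans (sum_setU1_le _ _ _) _.
  apply: leq_add; first exact: ideg_le_sqrt.
  have -> : (\sum_(i in B) ideg i)%N = #|B|.
    rewrite -sum1_card; apply: eq_bigr => i /imsetP[j _ ->].
    by have /andP[/eqP -> _] := gsP j.
  apply: leq_trans (leq_imset_card _ _) _.
  by rewrite (cardsD1 j1 SZ) j1S add1n subn1.
have ffT : ffset T.
  have EN := cfker_sumS T.
  rewrite /ffset -EN.
  set N := cfker _.
  have nsN : (N <| H)%g by exact: cfker_normal.
  rewrite subG1; apply/idPn => ntN.
  have := meet_center_nil (pgroup_nil pH) nsN ntN.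
  apply/negP/negPn/eqP/trivgP.
  apply/subsetP=> x /setIP[Nx Zx]; have {}Nx : x \in (H :&: \bigcap_(i in T) cfker 'chi_i)%g by rewrite -EN; exact: Nx.
  case/setIP: Nx => Hx /bigcapP Kx.
  apply: (subsetP ffSZ); rewrite inE Zx /=; apply/bigcapP => j jS.
  have l1 : 'chi_j1 x = 1.
    have : x \in cfker 'chi_j1 by rewrite -(kerZ Ei1) inE Zx Kx // setU11.
    by rewrite cfkerEchar ?irr_char // inE Zx lin_char1 //= => /eqP.
  rewrite cfkerEchar ?irr_char // inE Zx lin_char1 //=.
  have [-> | nj] := eqVneq j j1; first by rewrite l1.
  have /andP[_ /forall_inP/(_ x Zx)/implyP] := gsP j; apply.
  rewrite l1 eqxx andbT; apply: Kx.
  by rewrite /T /B setU1r // imset_f // !inE nj.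
have SZ0 : (0 < #|SZ|)%N by apply/card_gt0P; exists j1.
apply: leq_trans (m_setle ffT) _; apply: leq_trans sumT _.
rewrite -addnBA ?(leq_trans SZ0 leSZ) // leq_add2l leq_sub2r //.
Qed.
End P6.

Theorem theorem1p3 (gT : finGroupType) (p : nat) (H : {group gT}) :
  prime p -> (p.-group H)%g -> (nil_class H <= 2)%N -> cyclic [~: H, H]%g ->
  m_faithful H = (Nat.sqrt #|H : 'Z(H)|%g + m_faithful 'Z(H)%G - 1)%N.
Proof.
move=> pr_p pH nil2 cD.
have sDZ : ([~: H, H] \subset 'Z(H))%g by rewrite -derg1 -nil_class2.
have [abH | nabH] := boolP (abelian H).
  have EZ : 'Z(H)%G = H by apply: val_inj; exact/center_idP.
  rewrite EZ (center_idP abH) indexgg /=.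
  by rewrite add1n subn1.
have ntD : [~: H, H]%g != 1%g :> {set gT}.
  by apply: contraNneq nabH => D1; apply/derG1P; rewrite derg1 D1.
apply/eqP; rewrite eqn_leq (upper_bound pH sDZ cD ntD) (lower_bound pH sDZ cD ntD).
by [].
Qed.
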